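(* Let $\mathbf A$ be the BBL transformation of a matrix Laurent polynomial of bandwidth $(p,q)$, and let $L\le R$ be finite integers with $R-L\ge\tau$ (non-empty bulk). Then: (i) $\mathbf P_{L,R}\ker\mathbf A\subseteq\mathcal M_{L,R}$; (ii) if the principal coefficients $a_{p'}$ and $a_{q'}$ are both invertible (i.e. $p\le 0\le q$ and $a_p,a_q$ invertible), then $\mathbf P_{L,R}\ker\mathbf A=\mathcal M_{L,R}$.
   Context: Fix $d\ge1$; $\mathbf M_d$ denotes complex $d\times d$ matrices. $\mathcal V^S_d$ is the vector space of all doubly infinite sequences $\Psi=\{\psi_j\}_{j\in\mathbb Z}$ with $\psi_j\in\mathbb C^d$ (no topology). A matrix Laurent polynomial of bandwidth $(p,q)$ is $A(w,w^{-1})=\sum_{r=p}^q a_rw^r$ with integers $p\le q$, $a_r\in\mathbf M_d$, $a_p\neq0\neq a_q$. Its banded block-Laurent (BBL) transformation $\mathbf A$ acts on $\mathcal V^S_d$ by $(\mathbf A\Psi)_j=\sum_{r=p}^q a_r\psi_{j+r}$. Put $p'=\min(p,0)$, $q'=\max(0,q)$, $\tau=q'-p'$. The principal coefficients are $a_{p'}$ (equal to $a_p$ if $p\le0$ and to $0$ if $p>0$) and $a_{q'}$ (equal to $a_q$ if $q\ge0$ and to $0$ if $q<0$). For $-\infty\le L\le R\le\infty$, $\mathcal V_{L,R}\subseteq\mathcal V^S_d$ is the subspace of sequences with $\psi_j=0$ whenever $j<L$ or $j>R$, and $\mathbf P_{L,R}$ is the projection of $\mathcal V^S_d$ onto $\mathcal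 V_{L,R}$ that replaces $\psi_j$ by $0$ for $j\notin[L,R]$. The bulk solution space is $\mathcal M_{L,R}=\ker\big(\mathbf P_{L-p',R-q'}\mathbf A|_{\mathcal V_{L,R}}\big)\subseteq\mathcal V_{L,R}$ (an infinite endpoint shifted by a finite amount stays infinite). For finite $L\le R$, $\mathcal V_{L,R}\cong\mathbb C^N\otimes\mathbb C^d$ with $N=R-L+1$, and $A_N=\mathbf P_{L,R}\mathbf A|_{\mathcal V_{L,R}}$ is the banded block-Toeplitz (BBT) matrix with blocks $[A_N]_{ij}=a_{j-i}$; with the bulk projector $P_B=\mathbf P_{L-p',R-q'}|_{\mathcal V_{L,R}}$ one has $\mathcal M_{L,R}=\ker P_BA_N$. *)

(* Defs.v *)
(* Scalars: an arbitrary field F (the paper uses C; the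
   statement is purely algebraic). *)
From HB Require Import structures.
From mathcomp Require Import all_boot all_order all_algebra.
Set Implicit Arguments. Unset Strict Implicit. Unset Printing Implicit Defensive.
Import Order.TTheory GRing.Theory Num.Theory.
Local Open Scope ring_scope.

Definition seqV (F : fieldType) (d : nat) := int -> 'cV[F]_d.

Definition is_laurent_bw (F : fieldType) (d : nat) (a : int -> 'M[F]_d)
  (p q : int) : Prop :=
  [/\ p <= q, a p != 0, a q != 0 & forall r : int, (r < p) || (q < r) -> a r = 0].

(* BBL transformation: (A Psi)_j = sum_{r=p}^{q} a_r psi_{j+r}. *)
Definition bbl (F : fieldType) (d : nat) (a : int -> 'M[F]_d) (p q : int)
  (Psi : seqV F d) : seqV F d :=
  fun j => \sum_(k < (`|q - p|%N).+1) a (p + k%:Z) *m Psi (j + (p + k%:Z)).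

Definition kerA (F : fieldType) (d : nat) (a : int -> 'M[F]_d) (p q : int)
  (Psi : seqV F d) : Prop :=
  forall j : int, bbl a p q Psi j = 0.

Definition projLR (F : fieldType) (d : nat) (L R : int) (Psi : seqV F d)
  : seqV F d :=
  fun j => if (L <= j <= R) then Psi j else 0.

Definition inV (F : fieldType) (d : nat) (L R : int) (Psi : seqV F d) : Prop :=
  forall j : int, (j < L) || (R < j) -> Psi j = 0.

Definition pprime (p : int) : int := Order.min p 0.
Definition qprime (q : int) : int := Order.max 0 q.
Definition tau (p q : int) : int := qprime q - pprime p.

(* Bulk solution space M_{L,R} = ker (P_{L-p',R-q'} A |_{V_{L,R}}). *)
Definition inM (F : fieldType) (d : nat) (a : int -> 'M[F]_d) (p q : int)
  (L R : int) (Psi : seqV F d) : Prop :=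
  inV L R Psi /\
  forall j : int, L - pprime p <= j <= R - qprime q -> bbl a p q Psi j = 0.

(* Main.v *)
Require Import Defs.
From HB Require Import structures.
From mathcomp Require Import all_boot all_order all_algebra.
From mathcomp Require Import zify.
From Stdlib Require Import FunctionalExtensionality.
Import Order.TTheory GRing.Theory Num.Theory.
Local Open Scope ring_scope.
Set Implicit Arguments. Unset Strict Implicit.

Definition Rv (F : fieldType) (d : nat) (a : int -> 'M[F]_d) (p q : int)
  (g : seqV F d) (j : int) : 'cV[F]_d :=
  - (invmx (a q) *m \sum_(k < `|q - p|%N) a (p + k%:Z) *m g (j - q + (p + k%:Z))).

Definition Lv (F : fieldType) (d : nat) (a : int -> 'M[F]_d) (p q : int)
  (g : seqV F d) (j : int) : 'cV[F]_d :=
  - (invmx (a p) *m \sum_(k < `|q - p|%N) a (p + (k.+1)%:Z) *m g (j - p + (p + (k.+1)%:Z))).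

Definition stepf (F : fieldType) (d : nat) (a : int -> 'M[F]_d) (p q L R : int)
  (f : seqV F d) (n : nat) : seqV F d := fun j =>
  if j == R + (n.+1)%:Z then Rv a p q f j
  else if j == L - (n.+1)%:Z then Lv a p q f j else f j.

Fixpoint fs (F : fieldType) (d : nat) (a : int -> 'M[F]_d) (p q L R : int)
  (Phi : seqV F d) (n : nat) : seqV F d :=
  match n with 0%N => Phi | n'.+1 => stepf a p q L R (fs a p q L R Phi n') n' end.

Lemma fs_S (F : fieldType) (d : nat) (a : int -> 'M[F]_d) (p q L R : int)
  (Phi : seqV F d) (n : nat) (j : int) :
  L - n%:Z <= j <= R + n%:Z -> fs a p q L R Phi n.+1 j = fs a p q L R Phi n j.
Proof.
move=> /andP[h1 h2] /=; rewrite /stepf.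
have -> : (j == R + (n.+1)%:Z) = false by apply/eqP; lia.
have -> : (j == L - (n.+1)%:Z) = false by apply/eqP; lia.
by [].
Qed.

Lemma fs_stable (F : fieldType) (d : nat) (a : int -> 'M[F]_d) (p q L R : int)
  (Phi : seqV F d) (n k : nat) (j : int) :
  L - n%:Z <= j <= R + n%:Z -> fs a p q L R Phi (n + k) j = fs a p q L R Phi n j.
Proof.
move=> /andP[h1 h2]; elim: k => [|k IH]; first by rewrite addn0.
rewrite addnS fs_S ?IH //; apply/andP; split; lia.
Qed.

Lemma fs_le (F : fieldType) (d : nat) (a : int -> 'M[F]_d) (p q L R : int)
  (Phi : seqV F d) (n m : nat) (j : int) :
  (n <= m)%N ->
  L - n%:Z <= j <= R + n%:Z -> fs a p q L R Phi m j = fs a p q L R Phi n j.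
Proof.
move=> hnm hj; rewrite -(subnKC hnm); exact: fs_stable.
Qed.

Definition Psif (F : fieldType) (d : nat) (a : int -> 'M[F]_d) (p q L R : int)
  (Phi : seqV F d) : seqV F d :=
  fun j => fs a p q L R Phi (`|j - L|%N + `|j - R|%N) j.

Lemma Psi_eq (F : fieldType) (d : nat) (a : int -> 'M[F]_d) (p q L R : int)
  (Phi : seqV F d) (n : nat) (j : int) :
  L - n%:Z <= j <= R + n%:Z -> Psif a p q L R Phi j = fs a p q L R Phi n j.
Proof.
move=> hj; rewrite /Psif.
set N := (`|j - L|%N + `|j - R|%N)%N.
have hN : L - N%:Z <= j <= R + N%:Z by apply/andP; split; rewrite /N; lia.
rewrite -(@fs_le _ _ _ _ _ _ _ _ _ (maxn N n)) ?leq_maxl //.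
by rewrite (@fs_le _ _ _ _ _ _ _ _ n) ?leq_maxr.
Qed.

Lemma unit_nz (F : fieldType) (n : nat) (A : 'M[F]_n) :
  (1 <= n)%N -> A \in unitmx -> A != 0.
Proof.
case: n A => [//|n] A _ hA; apply/eqP => A0.
by move: hA; rewrite A0 unitmxE det0 unitr0.
Qed.

Unset Implicit Arguments.
Theorem mainTheorem2 (F : fieldType) (d : nat) (a : int -> 'M[F]_d)
  (p q L R : int) :
  (1 <= d)%N ->
  is_laurent_bw a p q ->
  tau p q <= R - L ->
  (forall Psi : seqV F d, kerA a p q Psi -> inM a p q L R (projLR L R Psi)) /\
  (a (pprime p) \in unitmx -> a (qprime q) \in unitmx ->
   forall Phi : seqV F d,
     inM a p q L R Phi <->
     exists Psi : seqV F d, kerA a p q Psi /\ projLR L R Psi = Phi).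
Proof.
move=> hd [hpq ap aq a0] htau.
have htau' : q - p <= R - L by move: htau; rewrite /tau /pprime /qprime; lia.
have partI : forall Psi : seqV F d, kerA a p q Psi -> inM a p q L R (projLR L R Psi).
  move=> Psi hK; split.
    move=> j hj; rewrite /projLR.
    have -> : (L <= j <= R) = false by apply/negbTE; lia.
    by [].
  move=> j hj; rewrite -(hK j) /bbl; apply: eq_bigr => k _; rewrite /projLR.
  have hk : (k <= `|q - p|%N)%N by rewrite -ltnS ltn_ord.
  have -> : (L <= j + (p + k%:Z) <= R) = true.
    apply/andP; split; move: hj; rewrite /pprime /qprime; lia.
  by [].
split => // hup huq Phi; split; last first.
  by move=> [Psi [hK <-]]; exact: partI.
move=> [hV hM].
have hp0 : p <= 0.
  case: (lerP p 0) => // hp; move: hup.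
  have -> : pprime p = 0 by rewrite /pprime; lia.
  rewrite a0; last by apply/orP; left; lia.
  by move=> h; move: (unit_nz hd h); rewrite eqxx.
have hq0 : 0 <= q.
  case: (lerP 0 q) => // hq; move: huq.
  have -> : qprime q = 0 by rewrite /qprime; lia.
  rewrite a0; last by apply/orP; right; lia.
  by move=> h; move: (unit_nz hd h); rewrite eqxx.
have ep : pprime p = p by rewrite /pprime; lia.
have eq' : qprime q = q by rewrite /qprime; lia.
rewrite ep eq' in hup huq hM.
set K := `|q - p|%N.
have hK : K%:Z = q - p by rewrite /K; lia.
exists (Psif a p q L R Phi); split; last first.
  apply: functional_extensionality => j; rewrite /projLR.
  case: ifP => hj.
    by rewrite (@Psi_eq _ _ _ _ _ _ _ _ 0%N) //; lia.
  by rewrite hV //; lia.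
move=> m; rewrite /bbl.
case: (lerP (L - p) m) => hm1; last first.
  set n := `|(L - m - p - 1)%R|%N.
  have hn : n%:Z = L - m - p - 1 by rewrite /n; lia.
  rewrite big_ord_recl (_ : p + (ord0 : 'I__.+1) = p); last by rewrite addr0.
  rewrite (@Psi_eq _ _ _ _ _ _ _ _ n.+1); last lia.
  change (fs a p q L R Phi n.+1) with (stepf a p q L R (fs a p q L R Phi n) n).
  rewrite /stepf.
  have -> : (m + p == R + (n.+1)%:Z) = false by apply/eqP; lia.
  have -> : (m + p == L - (n.+1)%:Z) = true by apply/eqP; lia.
  rewrite /Lv mulmxN mulmxA mulmxV // mul1mx.
  rewrite [LHS]addrC; apply/eqP; rewrite subr_eq0; apply/eqP.
  apply: eq_big => // i _.
  have hi : (i < K)%N by exact: ltn_ord.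
  rewrite (@Psi_eq _ _ _ _ _ _ _ _ n); last first.
    apply/andP; split; rewrite lift0; lia.
  congr (a _ *m fs a p q L R Phi n _); rewrite lift0; lia.
case: (lerP m (R - q)) => hm2.
  rewrite -[RHS](hM m); last by apply/andP.
  rewrite /bbl.
  apply: eq_bigr => k _.
  have hk : (k <= K)%N by rewrite -ltnS ltn_ord.
  rewrite (@Psi_eq _ _ _ _ _ _ _ _ 0%N) //; lia.
set n := `|(m + q - R - 1)%R|%N.
have hn : n%:Z = m + q - R - 1 by rewrite /n; lia.
rewrite big_ord_recr (_ : p + (ord_max : 'I__.+1) = q); last by rewrite /=; lia.
rewrite (@Psi_eq _ _ _ _ _ _ _ _ n.+1); last lia.
change (fs a p q L R Phi n.+1) with (stepf a p q L R (fs a p q L R Phi n) n).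
  rewrite /stepf.
have -> : (m + q == R + (n.+1)%:Z) = true by apply/eqP; lia.
rewrite /Rv mulmxN mulmxA mulmxV // mul1mx.
apply/eqP; rewrite subr_eq0; apply/eqP.
apply: eq_bigr => i _.
have hi : (i < K)%N by exact: ltn_ord.
rewrite (@Psi_eq _ _ _ _ _ _ _ _ n); last by rewrite /=; lia.
congr (a _ *m fs a p q L R Phi n _); rewrite /=; lia.
Qed.
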